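(* Let $L$ be a semilattice. Let $X_L=\{P\in\mathrm{Ind}(L)\mid \bigcap_{T\in\mathrm{Ind}(L),\,T\supsetneq P}T\supsetneq P\}$, and for $l\in L$ let $\mathrm{Supp}(l)=\{P\in X_L\mid l\notin P\}$, where $X_L$ carries the coarsest topology in which all $\mathrm{Supp}(l)$ are closed. Then $X_L$ with this map $\mathrm{Supp}$ is the universal support datum of $L$: for every support datum $Y$ of $L$ there exists a unique map of support data $X_L\to Y$.
   Context: A semilattice is a partially ordered set in which any two elements have a supremum; a map of semilattices preserves finite suprema. For a semilattice $L$, an ind-object is a non-empty subset $T\subset L$ closed under suprema of two elements and downward closed; $\mathrm{Ind}(L)$ is the set of ind-objects ordered by inclusion. Any semilattice map $f\colon L\to L'$ into a semilattice $L'$ in which every non-empty subset has a supremum extends uniquely to $\tilde f\colon \mathrm{Ind}(L)\to L'$ preserving arbitrary suprema. For a set $X$, $2^X$ is ordered by inclusion. A support datum of $L$ is a $T_0$ topological space $X$ with a semilattice map $\mathrm{Supp}\colon L\to 2^X$ such that (1) the induced map $\mathrm{Ind}(L)\to 2^X$ is injective, and (2) the topology of $X$ is the coarsest in which all $\mathrm{Supp}(l)$, $l\in L$, are closed. A map of support data $X\to Y$ is a continuous map $f$ with $\mathrm{Supp}_X(l)=f^{-1}(\mathrm{Supp}_Y(l))$ for all $l\in L$. *)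

(* Defs.v *)
From HB Require Import structures.
From mathcomp Require Import all_boot all_order.
Set Implicit Arguments. Unset Strict Implicit. Unset Printing Implicit Defensive.
Import Order.LTheory.
Local Open Scope order_scope.

Section SemilatticeSupport.
Context {disp : Order.disp_t} {L : joinSemilatticeType disp}.

Definition is_ind (T : L -> Prop) : Prop :=
  (exists l, T l) /\
  (forall l m, T l -> T m -> T (l `|` m)) /\
  (forall l m, (m <= l) -> T l -> T m).

Definition ind_above_inter (P : L -> Prop) : L -> Prop :=
  fun l => forall T, is_ind T ->
    ((forall x, P x -> T x) /\ (exists x, T x /\ ~ P x)) -> T l.

Definition in_XL (P : L -> Prop) : Prop :=
  is_ind P /\
  (forall x, P x -> ind_above_inter P x) /\
  (exists x, ind_above_inter P x /\ ~ P x).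

Definition XL : Type := {P : L -> Prop | in_XL P}.

Definition SuppXL (l : L) : XL -> Prop := fun P => ~ proj1_sig P l.

Inductive gen_open {X : Type} (B : (X -> Prop) -> Prop) : (X -> Prop) -> Prop :=
  | gen_open_base U : B U -> gen_open B U
  | gen_open_full : gen_open B (fun _ => True)
  | gen_open_inter U V : gen_open B U -> gen_open B V ->
      gen_open B (fun x => U x /\ V x)
  | gen_open_union (F : (X -> Prop) -> Prop) :
      (forall U, F U -> gen_open B U) ->
      gen_open B (fun x => exists U, F U /\ U x).

(* Complements of the supports: the generated topology is the coarsest
   in which all Supp(l) are closed. *)
Definition supp_compl {X : Type} (S : L -> X -> Prop) : (X -> Prop) -> Prop :=
  fun U => exists l, U = (fun x => ~ S l x).

Definition opensXL : (XL -> Prop) -> Prop := gen_open (supp_compl SuppXL).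

(* The induced map Ind(L) -> 2^X (unique sup-preserving extension). *)
Definition ind_ext {X : Type} (S : L -> X -> Prop) (T : L -> Prop) : X -> Prop :=
  fun x => exists l, T l /\ S l x.

Definition is_T0 {X : Type} (opens : (X -> Prop) -> Prop) : Prop :=
  forall x y : X, x <> y ->
    exists U, opens U /\ ((U x /\ ~ U y) \/ (U y /\ ~ U x)).

Definition is_support_datum (X : Type) (opens : (X -> Prop) -> Prop)
    (S : L -> X -> Prop) : Prop :=
  is_T0 opens /\
  (forall l m, S (l `|` m) = (fun x => S l x \/ S m x)) /\
  (forall T1 T2, is_ind T1 -> is_ind T2 -> ind_ext S T1 = ind_ext S T2 -> T1 = T2) /\
  (forall U, opens U <-> gen_open (supp_compl S) U).

Definition is_continuous {X Y : Type} (opX : (X -> Prop) -> Prop)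
    (opY : (Y -> Prop) -> Prop) (f : X -> Y) : Prop :=
  forall V, opY V -> opX (fun x => V (f x)).

Definition is_support_map {X Y : Type} (opX : (X -> Prop) -> Prop)
    (SX : L -> X -> Prop) (opY : (Y -> Prop) -> Prop) (SY : L -> Y -> Prop)
    (f : X -> Y) : Prop :=
  is_continuous opX opY f /\ (forall l, SX l = (fun x => SY l (f x))).

End SemilatticeSupport.

(* Main.v *)
Require Import Defs.
From mathcomp Require Import all_boot all_order.
From mathcomp Require Import classical_sets.
From Stdlib Require Import Classical FunctionalExtensionality PropExtensionality ClassicalEpsilon.

Import Order.LTheory.

Lemma predext {X : Type} {P Q : X -> Prop} : (forall x, P x <-> Q x) -> P = Q.
Proof.
intros H; apply functional_extensionality; intros x; apply propositional_extensionality; apply H.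
Qed.

Lemma gen_open_ext {X : Type} (B : (X -> Prop) -> Prop) U V :
  gen_open B U -> (forall x, U x <-> V x) -> gen_open B V.
Proof. intros H E; rewrite <- (predext E); exact H. Qed.

Section Main.
Context {disp : Order.disp_t} {L : joinSemilatticeType disp}.
Local Open Scope order_scope.

Lemma ind_down {T : L -> Prop} {l m} : is_ind T -> m <= l -> T l -> T m.
Proof. intros [_ [_ H]] Hle Hl; exact (H l m Hle Hl). Qed.

Lemma ind_join {T : L -> Prop} {l m} : is_ind T -> T l -> T m -> T (l `|` m).
Proof. intros [_ [H _]]; apply H. Qed.

Lemma exists_max (T2 : L -> Prop) (l : L) : is_ind T2 -> ~ T2 l ->
  exists P, in_XL P /\ (forall x, T2 x -> P x) /\ ~ P l.
Proof.
intros HT2 Hl.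
set P0 := fun A : L -> Prop => A = (fun _ => False) \/
  (is_ind A /\ (forall x, T2 x -> A x) /\ ~ A l).
assert (HP0 : forall X a, P0 X -> X a -> is_ind X /\ (forall x, T2 x -> X x) /\ ~ X l).
{ intros X a [E|H] Ha; [subst X; contradiction| exact H]. }
destruct (@Zorn_bigcup L P0) as [A [PA Amax]].
{ intros F FP Ftot.
  destruct (classic (exists X, F X /\ exists x, X x)) as [[X0 [FX0 [x0 X0x0]]]|Hno].
  - right. destruct (HP0 X0 x0 (FP X0 FX0) X0x0) as [I0 [S0 N0]].
    split; [|split].
    + split; [|split].
      * exists x0. exists X0; auto.
      * intros a b [X1 F1 H1] [X2 F2 H2].
        destruct (Ftot X1 X2 F1 F2) as [S|S].
        -- exists X2; auto. apply ind_join; auto.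
           exact (proj1 (HP0 X2 b (FP X2 F2) H2)).
        -- exists X1; auto. apply ind_join; auto.
           exact (proj1 (HP0 X1 a (FP X1 F1) H1)).
      * intros a b Hle [X1 F1 H1]. exists X1; auto.
        apply (ind_down (proj1 (HP0 X1 a (FP X1 F1) H1)) Hle H1).
    + intros x Hx; exists X0; auto.
    + intros [X1 F1 H1]. exact (proj2 (proj2 (HP0 X1 l (FP X1 F1) H1)) H1).
  - left. apply predext; intros a; split; [|contradiction].
    intros [X1 F1 H1]; apply Hno; eauto. }
destruct PA as [E|[IA [SA NA]]].
{ exfalso. destruct (HT2) as [[x Hx] _].
  apply (Amax T2).
  - split; [subst A; intros t []|]. intros S; subst A; exact (S x Hx).
  - right; split; [exact HT2|split; auto]. }
exists A; split; [|split; auto].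
split; [exact IA|split].
- intros x Ax T IT [inc _]; auto.
- exists l; split; auto.
  intros T IT [inc [x [Tx nAx]]].
  apply NNPP; intros nTl.
  apply (Amax T).
  + split; [exact inc|]. intros S; exact (nAx (S x Tx)).
  + right; split; auto.
Qed.

Lemma XL_eq (P Q : @XL disp L) : (forall l, proj1_sig P l <-> proj1_sig Q l) -> P = Q.
Proof.
destruct P as [P HP], Q as [Q HQ]; simpl; intros H.
assert (E := predext H); subst Q. f_equal; apply proof_irrelevance.
Qed.

Lemma part1 : is_support_datum (@opensXL disp L) (@SuppXL disp L).
Proof.
split; [|split; [|split]].
- intros x y Hxy.
  assert (Hl : exists l, ~ (proj1_sig x l <-> proj1_sig y l)).
  { apply NNPP; intros Hn; apply Hxy; apply XL_eq; intros l.
    apply NNPP; intros Hn'; apply Hn; eauto. }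
  destruct Hl as [l Hl].
  exists (fun P => ~ SuppXL l P); split.
  + apply gen_open_base; exists l; reflexivity.
  + unfold SuppXL. destruct (classic (proj1_sig x l)) as [Hx|Hx];
    destruct (classic (proj1_sig y l)) as [Hy|Hy]; tauto.
- intros l m; apply predext; intros P; unfold SuppXL.
  destruct P as [P HP]; simpl; destruct (HP) as [IP _]. split.
  + intros H. destruct (classic (P l)); [|auto]. destruct (classic (P m)); [|auto].
    exfalso; apply H; apply ind_join; auto.
  + intros [H|H] Hj; apply H.
    * exact (ind_down IP (leUl l m) Hj).
    * exact (ind_down IP (leUr m l) Hj).
- assert (sub : forall T1 T2 : L -> Prop, is_ind T1 -> is_ind T2 ->
     ind_ext SuppXL T1 = ind_ext SuppXL T2 -> forall x, T1 x -> T2 x).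
  { intros T1 T2 I1 I2 E x Hx. apply NNPP; intros nx.
    destruct (exists_max T2 x I2 nx) as [P [HP [inc nP]]].
    assert (H1 : ind_ext SuppXL T1 (exist _ P HP)).
    { exists x; split; auto. }
    rewrite E in H1. destruct H1 as [k [Tk Sk]]. apply Sk; simpl; auto. }
  intros T1 T2 I1 I2 E. apply predext; intros x; split.
  + apply (sub T1 T2); auto.
  + apply (sub T2 T1); auto.
- intros U; unfold opensXL; tauto.
Qed.

Lemma gen_open_inv {Y : Type} {SY : L -> Y -> Prop} {U y1 y2} :
  gen_open (supp_compl SY) U -> (forall l, SY l y1 <-> SY l y2) -> (U y1 <-> U y2).
Proof.
intros H E; induction H as [U [l ->]| |U V _ IHU _ IHV|F _ IH].
- specialize (E l); tauto.
- tauto.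
- tauto.
- split; intros [U [FU HU]]; exists U; split; auto; apply (IH U FU); auto.
Qed.

Lemma point_unique {Y : Type} opY (SY : L -> Y -> Prop) y1 y2 :
  is_support_datum opY SY -> (forall l, SY l y1 <-> SY l y2) -> y1 = y2.
Proof.
intros [T0 [_ [_ Hop]]] E. apply NNPP; intros ne.
destruct (T0 _ _ ne) as [U [oU HU]].
apply Hop in oU. assert (I := gen_open_inv oU E). tauto.
Qed.

Lemma point_exists {Y : Type} opY (SY : L -> Y -> Prop) :
  is_support_datum opY SY -> forall P : @XL disp L,
  exists y, forall l, SY l y <-> ~ proj1_sig P l.
Proof.
intros [_ [Hjoin [Hinj _]]] [P HP]; simpl; destruct (HP) as [IP [_ [m [Qm nPm]]]].
set Q := ind_above_inter P.
assert (IQ : is_ind Q).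
{ split; [|split].
  - destruct IP as [[x Hx] _]. exists x. intros T _ [inc _]; auto.
  - intros a b Ha Hb T IT HT. apply ind_join; auto; [apply Ha|apply Hb]; auto.
  - intros a b Hle Ha T IT HT. apply (ind_down IT Hle). apply Ha; auto. }
assert (PQ : forall x, P x -> Q x). { intros x Hx T _ [inc _]; auto. }
assert (Hy : exists y, ind_ext SY Q y /\ ~ ind_ext SY P y).
{ apply NNPP; intros Hn.
  assert (E : ind_ext SY P = ind_ext SY Q).
  { apply predext; intros y; split.
    - intros [k [Pk Sk]]; exists k; auto.
    - intros H. apply NNPP; intros H'; apply Hn; eauto. }
  apply Hinj in E; auto. apply nPm. rewrite E. exact Qm. }
destruct Hy as [y [[m' [Qm' Sm']] nP]].
exists y. intros l; split.
- intros Sl Pl. apply nP; exists l; auto.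
- intros nPl. apply NNPP; intros nSl.
  set I := fun k => ~ SY k y.
  assert (II : is_ind I).
  { split; [|split].
    - exists l; exact nSl.
    - intros a b Ha Hb. unfold I in *. rewrite Hjoin. simpl. tauto.
    - intros a b Hle Ha Hb. apply Ha. rewrite <- (join_r Hle). rewrite Hjoin. simpl. left; exact Hb. }
  assert (HI : I m').
  { apply Qm'; auto. split.
    - intros x Px Sx. apply nP; exists x; auto.
    - exists l; split; auto. }
  exact (HI Sm').
Qed.

Lemma cont {Y : Type} (SY : L -> Y -> Prop) (f : @XL disp L -> Y) :
  (forall P l, SY l (f P) <-> ~ proj1_sig P l) ->
  forall V, gen_open (supp_compl SY) V ->
  gen_open (supp_compl SuppXL) (fun x => V (f x)).
Proof.
intros Hf V H; induction H as [U [l ->]| |U V _ IHU _ IHV|F _ IH].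
- apply (gen_open_ext _ (fun P => ~ SuppXL l P)).
  + apply gen_open_base; exists l; reflexivity.
  + intros P; unfold SuppXL; rewrite Hf; tauto.
- apply gen_open_full.
- apply (gen_open_inter IHU IHV).
- set F' := fun U' : @XL disp L -> Prop => exists U, F U /\ U' = (fun x => U (f x)).
  apply (gen_open_ext _ (fun x => exists U', F' U' /\ U' x)).
  + apply gen_open_union. intros U' [U [FU ->]]; auto.
  + intros x; split.
    * intros [U' [[U [FU ->]] HU]]; eauto.
    * intros [U [FU HU]]. exists (fun x => U (f x)); split; auto. exists U; auto.
Qed.

End Main.

Theorem mainTheorem2 (disp : Order.disp_t) (L : joinSemilatticeType disp) :
  is_support_datum (@opensXL disp L) (@SuppXL disp L) /\
  (forall (Y : Type) (opY : (Y -> Prop) -> Prop) (SY : L -> Y -> Prop),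
     is_support_datum opY SY ->
     exists! f : XL -> Y, is_support_map (@opensXL disp L) (@SuppXL disp L) opY SY f).
Proof.
split; [exact part1|].
intros Y opY SY HY.
set f := fun P : XL => proj1_sig (constructive_indefinite_description _ (point_exists _ _ HY P)).
assert (Hf : forall P l, SY l (f P) <-> ~ proj1_sig P l).
{ intros P; unfold f; destruct (constructive_indefinite_description _ _); auto. }
exists f; split.
- split.
  + intros V HV. apply (proj2 (proj2 (proj2 HY))) in HV.
    exact (cont _ _ Hf _ HV).
  + intros l; apply predext; intros P; unfold SuppXL; rewrite Hf; tauto.
- intros g [_ Hg]. apply functional_extensionality; intros P.
  apply (point_unique _ _ _ _ HY). intros l.
  assert (E := f_equal (fun h => h P) (Hg l)); simpl in E.
  rewrite <- E, Hf; unfold SuppXL; tauto.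
Qed.
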